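(* Let $X$ be a real Hilbert space, let $\beta>\delta>0$, and let $T_1,T_2\colon X\to X$. Suppose $T_1$ is $\tfrac1\beta$-cocoercive and $T_2$ is $\tfrac1\delta$-cocoercive. Then $T_1-T_2$ is $\beta$-Lipschitz continuous.
   Context: For $\beta>0$, an operator $T\colon X\to X$ is $\tfrac1\beta$-cocoercive if there exists a nonexpansive $N\colon X\to X$ with $T=\tfrac\beta2(\mathrm{Id}+N)$ (equivalently, $\langle x-y,Tx-Ty\rangle\ge\tfrac1\beta\|Tx-Ty\|^2$ for all $x,y$). Nonexpansive means $1$-Lipschitz. *)

(* Defs.v *)
From Stdlib Require Import Reals.
Open Scope R_scope.

Record HilbertSpace := {
  hs_car :> Type;
  hs_zero : hs_car;
  hs_add : hs_car -> hs_car -> hs_car;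
  hs_opp : hs_car -> hs_car;
  hs_scal : R -> hs_car -> hs_car;
  hs_inner : hs_car -> hs_car -> R;
  hs_addA : forall x y z, hs_add x (hs_add y z) = hs_add (hs_add x y) z;
  hs_addC : forall x y, hs_add x y = hs_add y x;
  hs_add0 : forall x, hs_add x hs_zero = x;
  hs_addN : forall x, hs_add x (hs_opp x) = hs_zero;
  hs_scalA : forall a b x, hs_scal a (hs_scal b x) = hs_scal (a * b) x;
  hs_scal1 : forall x, hs_scal 1 x = x;
  hs_scalDr : forall a x y, hs_scal a (hs_add x y) = hs_add (hs_scal a x) (hs_scal a y);
  hs_scalDl : forall a b x, hs_scal (a + b) x = hs_add (hs_scal a x) (hs_scal b x);
  hs_innerC : forall x y, hs_inner x y = hs_inner y x;
  hs_innerDl : forall x y z, hs_inner (hs_add x y) z = hs_inner x z + hs_inner y z;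
  hs_innerZl : forall a x y, hs_inner (hs_scal a x) y = a * hs_inner x y;
  hs_inner_ge0 : forall x, 0 <= hs_inner x x;
  hs_inner_eq0 : forall x, hs_inner x x = 0 -> x = hs_zero;
  hs_complete : forall u : nat -> hs_car,
    (forall eps, eps > 0 -> exists N, forall m n, (m >= N)%nat -> (n >= N)%nat ->
       sqrt (hs_inner (hs_add (u m) (hs_opp (u n))) (hs_add (u m) (hs_opp (u n)))) < eps) ->
    exists l, forall eps, eps > 0 -> exists N, forall n, (n >= N)%nat ->
       sqrt (hs_inner (hs_add (u n) (hs_opp l)) (hs_add (u n) (hs_opp l))) < eps
}.

Arguments hs_zero {h}.
Arguments hs_add {h}.
Arguments hs_opp {h}.
Arguments hs_scal {h}.
Arguments hs_inner {h}.

Definition hs_sub {X : HilbertSpace} (x y : X) : X := hs_add x (hs_opp y).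
Definition hs_norm {X : HilbertSpace} (x : X) : R := sqrt (hs_inner x x).

Definition lipschitz {X : HilbertSpace} (L : R) (T : X -> X) : Prop :=
  forall x y : X, hs_norm (hs_sub (T x) (T y)) <= L * hs_norm (hs_sub x y).

Definition nonexpansive {X : HilbertSpace} (N : X -> X) : Prop := lipschitz 1 N.

(* T is (1/beta)-cocoercive iff T = (beta/2)(Id + N) for some nonexpansive N. *)
Definition cocoercive {X : HilbertSpace} (beta : R) (T : X -> X) : Prop :=
  exists N : X -> X, nonexpansive N /\
    forall x : X, T x = hs_scal (beta / 2) (hs_add x (N x)).

(* Main.v *)
Require Import Defs.
From Stdlib Require Import Reals Lra.
Open Scope R_scope.

Section H.
Variable X : HilbertSpace.

Lemma add_cancel (a b : X) : hs_add a b = a -> b = hs_zero.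
Proof.
  intro H.
  assert (E: hs_add (hs_opp a) (hs_add a b) = hs_add (hs_opp a) a) by now rewrite H.
  rewrite hs_addA, (hs_addC _ (hs_opp a) a), hs_addN in E.
  rewrite hs_addC, hs_add0 in E. exact E.
Qed.

Lemma scal0 (x : X) : hs_scal 0 x = hs_zero.
Proof.
  apply (add_cancel (hs_scal 0 x)). rewrite <- hs_scalDl. f_equal; ring.
Qed.

Lemma oppE (x : X) : hs_opp x = hs_scal (-1) x.
Proof.
  assert (E: hs_add x (hs_scal (-1) x) = hs_zero).
  { rewrite <- (hs_scal1 _ x) at 1. rewrite <- hs_scalDl.
    replace (1 + -1) with 0 by ring. apply scal0. }
  rewrite <- (hs_add0 _ (hs_opp x)), <- E, hs_addA, (hs_addC _ (hs_opp x) x),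
    hs_addN, hs_addC, hs_add0. reflexivity.
Qed.

Lemma inner0l (v : X) : hs_inner hs_zero v = 0.
Proof.
  rewrite <- (scal0 hs_zero), hs_innerZl. ring.
Qed.

Lemma innerDr (x y z : X) : hs_inner x (hs_add y z) = hs_inner x y + hs_inner x z.
Proof. rewrite hs_innerC, hs_innerDl, (hs_innerC _ y), (hs_innerC _ z). reflexivity. Qed.

Lemma innerZr a (x y : X) : hs_inner x (hs_scal a y) = a * hs_inner x y.
Proof. rewrite hs_innerC, hs_innerZl, hs_innerC. reflexivity. Qed.

Lemma norm_ge0 (x : X) : 0 <= hs_norm x.
Proof. apply sqrt_pos. Qed.

Lemma norm_sq (x : X) : hs_norm x * hs_norm x = hs_inner x x.
Proof. apply sqrt_sqrt, hs_inner_ge0. Qed.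

Lemma norm_scal a (x : X) : hs_norm (hs_scal a x) = Rabs a * hs_norm x.
Proof.
  unfold hs_norm. rewrite hs_innerZl, innerZr, <- Rmult_assoc.
  rewrite sqrt_mult_alt.
  - f_equal. change (a*a) with (Rsqr a). apply sqrt_Rsqr_abs.
  - apply Rle_0_sqr.
Qed.

Lemma CS (u v : X) : hs_inner u v <= hs_norm u * hs_norm v.
Proof.
  set (p := hs_norm u). set (q := hs_norm v).
  assert (Hp : p*p = hs_inner u u) by apply norm_sq.
  assert (Hq : q*q = hs_inner v v) by apply norm_sq.
  assert (H0 := hs_inner_ge0 _ (hs_add (hs_scal q u) (hs_scal (-p) v))).
  rewrite !hs_innerDl, !innerDr, !hs_innerZl, !innerZr in H0.
  rewrite (hs_innerC _ v u) in H0.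
  rewrite <- Hp, <- Hq in H0.
  assert (Hp0 : 0 <= p) by apply norm_ge0.
  assert (Hq0 : 0 <= q) by apply norm_ge0.
  assert (K : 0 <= (p*q) * (p*q - hs_inner u v)) by nra.
  destruct (Rle_lt_or_eq_dec 0 (p*q)) as [Hlt|Heq].
  - apply Rmult_le_pos; assumption.
  - assert (0 <= p*q - hs_inner u v).
    { apply (Rmult_le_reg_l (p*q)); lra. }
    lra.
  - rewrite <- Heq.
    destruct (Rmult_integral _ _ (eq_sym Heq)) as [E|E].
    + assert (hs_inner u u = 0) by (rewrite <- Hp, E; ring).
      rewrite (hs_inner_eq0 _ u H), inner0l. lra.
    + assert (hs_inner v v = 0) by (rewrite <- Hq, E; ring).
      rewrite (hs_inner_eq0 _ v H), hs_innerC, inner0l. lra.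
Qed.

Lemma norm_tri (u v : X) : hs_norm (hs_add u v) <= hs_norm u + hs_norm v.
Proof.
  assert (C := CS u v).
  assert (Hu := norm_sq u). assert (Hv := norm_sq v).
  assert (Hu0 := norm_ge0 u). assert (Hv0 := norm_ge0 v).
  unfold hs_norm at 1.
  rewrite <- (sqrt_square (hs_norm u + hs_norm v)) by lra.
  apply sqrt_le_1_alt.
  rewrite !hs_innerDl, !innerDr, (hs_innerC _ v u). nra.
Qed.

Lemma add4 (a b c d : X) : hs_add (hs_add a b) (hs_add c d) = hs_add (hs_add a c) (hs_add b d).
Proof.
  rewrite <- !hs_addA. f_equal. rewrite !hs_addA. f_equal. apply hs_addC.
Qed.

Lemma pair_sub k (x y : X) :
  hs_add (hs_scal k x) (hs_scal (-1) (hs_scal k y)) = hs_scal k (hs_sub x y).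
Proof.
  unfold hs_sub. rewrite oppE, hs_scalDr, !hs_scalA. do 2 f_equal. ring.
Qed.

End H.

Theorem mainTheorem3 (X : HilbertSpace) (beta delta : R) (T1 T2 : X -> X) :
  beta > delta -> delta > 0 ->
  cocoercive beta T1 -> cocoercive delta T2 ->
  lipschitz beta (fun x => hs_sub (T1 x) (T2 x)).
Proof.
  intros Hbd Hd [N1 [HN1 E1]] [N2 [HN2 E2]] x y.
  assert (Eq : hs_sub (hs_sub (T1 x) (T2 x)) (hs_sub (T1 y) (T2 y)) =
    hs_add (hs_add (hs_scal (beta/2) (hs_sub x y)) (hs_scal (-(delta/2)) (hs_sub x y)))
           (hs_add (hs_scal (beta/2) (hs_sub (N1 x) (N1 y)))
                   (hs_scal (-(delta/2)) (hs_sub (N2 x) (N2 y))))).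
  { rewrite <- !(pair_sub X (beta/2)), <- !(pair_sub X (-(delta/2))).
    rewrite (add4 _ (hs_scal (beta / 2) x)).
    rewrite (add4 _ (hs_scal (beta / 2) (N1 x))).
    rewrite (add4 X (hs_add (hs_scal (beta / 2) x) _)).
    rewrite (add4 X (hs_scal (beta / 2) x)).
    rewrite (add4 X (hs_scal (-1) (hs_scal (beta / 2) y))).
    unfold hs_sub. rewrite !E1, !E2, !oppE, ?hs_scalDr, ?hs_scalA, ?hs_scalDr, ?hs_scalA.
    replace (-1 * (delta / 2)) with (- (delta / 2)) by ring.
    replace (-1 * -1 * (delta / 2)) with (-1 * - (delta / 2)) by ring.
    reflexivity. }
  rewrite Eq. rewrite <- hs_scalDl.
  eapply Rle_trans. apply norm_tri.
  eapply Rle_trans. apply Rplus_le_compat_l. apply norm_tri.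
  rewrite !norm_scal.
  assert (H1 := HN1 x y). assert (H2 := HN2 x y).
  assert (Hn := norm_ge0 _ (hs_sub x y)).
  rewrite Rabs_right by lra. rewrite Rabs_right by lra. rewrite Rabs_left by lra.
  unfold Rminus in *.
  assert (0 <= hs_norm (hs_sub (N1 x) (N1 y))) by apply norm_ge0.
  assert (0 <= hs_norm (hs_sub (N2 x) (N2 y))) by apply norm_ge0.
  nra.
Qed.
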